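(* Let $X$ be a quasi-Banach function space over $\mathbf{R}^d$ for which $X'\ne\{0\}$. If $\mathbf{1}_{\mathbf{R}^d}\in X$, then $M$ is not bounded from $X'$ to $X'$.
   Context: A quasi-Banach function space over $\mathbf{R}^d$ is a complete quasi-normed space $X\subseteq L^0(\mathbf{R}^d)$ with the ideal property (if $f\in X$, $|g|\le|f|$ then $g\in X$, $\|g\|_X\le\|f\|_X$) and the saturation property (every set of positive measure contains a subset $F$ of positive measure with $\mathbf{1}_F\in X$). Köthe dual: $X'=\{g:fg\in L^1(\mathbf{R}^d)\ \forall f\in X\}$ with $\|g\|_{X'}=\sup_{\|f\|_X=1}\int|fg|$. $M$ is the Hardy–Littlewood maximal operator over axis-parallel cubes. *)

(* Defs.v *)
From HB Require Import structures.
From mathcomp Require Import all_boot all_order all_algebra.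
From mathcomp Require Import all_classical all_reals all_analysis.
Set Implicit Arguments. Unset Strict Implicit. Unset Printing Implicit Defensive.
Import Order.TTheory GRing.Theory Num.Theory.
Import numFieldNormedType.Exports.
Local Open Scope classical_set_scope.
Local Open Scope ring_scope.

Definition Rd (R : realType) (d : nat) : measurableType _ :=
  g_sigma_algebraType (@open 'rV[R]_d).

Section defs.
Context {R : realType} {d : nat}.
Local Notation T := (Rd R d).

Definition cube (a : 'rV[R]_d) (l : R) : set T :=
  [set x : T | forall i : 'I_d, a ord0 i <= (x : 'rV[R]_d) ord0 i <= a ord0 i + l].

(* d-dimensional Lebesgue (outer) measure, defined by countable cube covers *)
Definition leb (A : set T) : \bar R :=
  ereal_inf [set S : \bar R | exists (a : nat -> 'rV[R]_d) (l : nat -> R),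
     (forall k, 0 < l k) /\ A `<=` \bigcup_k cube (a k) (l k) /\
     S = (\sum_(0 <= k <oo) ((l k) ^+ d)%:E)%E].

Definition ae (P : T -> Prop) : Prop :=
  exists N : set T, measurable N /\ leb N = 0%E /\ [set x | ~ P x] `<=` N.

Definition ae_zero (f : T -> R) : Prop := ae (fun x => f x = 0).

Definition int_abs (A : set T) (f : T -> R) : \bar R :=
  (\int[leb]_(x in A) (`|f x|)%:E)%E.

Definition indic (A : set T) : T -> R := fun x => if `[< A x >] then 1 else 0.

(* quasi-Banach function space over R^d: X is (a set of representatives of)
   a subspace of L^0, nX its quasi-norm *)
Definition is_QBFS (X : set (T -> R)) (nX : (T -> R) -> R) : Prop :=
      (forall f, X f -> measurable_fun setT f) /\
      X (fun _ => 0) /\ (forall f g, X f -> X g -> X (fun x => f x + g x)) /\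
      (forall (c : R) f, X f -> X (fun x => c * f x)) /\
      (forall f, X f -> 0 <= nX f) /\
      (forall f, X f -> (nX f = 0 <-> ae_zero f)) /\
      (forall (c : R) f, X f -> nX (fun x => c * f x) = `|c| * nX f) /\
      (exists K : R, 1 <= K /\ forall f g, X f -> X g ->
          nX (fun x => f x + g x) <= K * (nX f + nX g)) /\
      (forall u : nat -> T -> R, (forall n, X (u n)) ->
         (forall e : R, 0 < e -> exists N : nat, forall m n : nat,
            (N <= m)%N -> (N <= n)%N -> nX (fun x => u m x - u n x) < e) ->
         exists f, X f /\
           (fun n => nX (fun x => u n x - f x)) @ \oo --> (0 : R)) /\
      (forall f (g : T -> R), X f -> measurable_fun setT g ->
         ae (fun x => `|g x| <= `|f x|) -> X g /\ nX g <= nX f) /\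
      (forall E : set T, measurable E -> (0 < leb E)%E ->
         exists F : set T, [/\ measurable F, F `<=` E, (0 < leb F)%E & X (indic F)]).

Definition kothe (X : set (T -> R)) : set (T -> R) :=
  [set g : T -> R | measurable_fun setT g /\
     forall f, X f -> (int_abs setT (fun x => (f x * g x)%R) < +oo)%E].

Definition kothe_norm (X : set (T -> R)) (nX : (T -> R) -> R) (g : T -> R) : \bar R :=
  ereal_sup [set int_abs setT (fun x => (f x * g x)%R) | f in [set f | X f /\ nX f = 1]].

Definition HLmax (f : T -> R) (x : T) : \bar R :=
  ereal_sup [set S : \bar R | exists (a : 'rV[R]_d) (l : R),
     [/\ 0 < l, cube a l x & S = (((l ^+ d)^-1)%:E * int_abs (cube a l) f)%E]].

Definition HLmax_bounded (Y : set (T -> R)) (nY : (T -> R) -> \bar R) : Prop :=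
  exists C : R, 0 <= C /\ forall g, Y g ->
    exists h, [/\ Y h, ae (fun x => HLmax g x = (h x)%:E) & (nY h <= C%:E * nY g)%E].
End defs.

(* Main.v *)
Require Import Defs.
From HB Require Import structures.
From mathcomp Require Import all_boot all_order all_algebra.
From mathcomp Require Import all_classical all_reals all_analysis.
From mathcomp Require Import ring lra.
Set Implicit Arguments. Unset Strict Implicit. Unset Printing Implicit Defensive.
Import Order.TTheory GRing.Theory Num.Theory.
Import numFieldNormedType.Exports.
Local Open Scope classical_set_scope.
Local Open Scope ring_scope.
Section leb_props.
Context {R : realType} {d : nat}.
Local Notation T := (Rd R d).
Local Open Scope ereal_scope.

Lemma leb_ge0 (A : set T) : 0 <= leb A.
Proof.
apply: le_ereal_inf_tmp => _ [a [l [l0 [_ ->]]]].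
by apply: nneseries_ge0 => n _; rewrite lee_fin exprn_ge0// ltW.
Qed.

Lemma le_leb (A B : set T) : A `<=` B -> leb A <= leb B.
Proof.
move=> AB; apply: le_ereal_inf => _ [a [l [l0 [Bc ->]]]].
by exists a, l; split => //; split => //; apply: subset_trans Bc.
Qed.

Lemma leb_sigma_sub (A : nat -> set T) :
  leb (\bigcup_n A n) <= \sum_(n <oo) leb (A n).
Proof.
have [[i ioo]|] := pselect (exists i, leb (A i) = +oo).
  rewrite (eseries_pinfty _ _ ioo) ?leey// => n _.
  by rewrite -ltNye (lt_le_trans _ (leb_ge0 _)).
rewrite -forallNE => Aoo.
apply/lee_addgt0Pr => e e0.
rewrite (le_trans _ (epsilon_trick _ _ _))//; last 2 first.
  by move=> n; exact: leb_ge0.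
  by rewrite ltW.
pose P n (al : (nat -> 'rV[R]_d) * (nat -> R)) :=
  (forall k, (0 < al.2 k)%R) /\ A n `<=` \bigcup_k cube (al.1 k) (al.2 k) /\
  \sum_(k <oo) ((al.2 k) ^+ d)%:E <= leb (A n) + (e / (2 ^ n.+1)%:R)%:E.
have [G PG] : {G : nat -> ((nat -> 'rV[R]_d) * (nat -> R)) & forall n, P n (G n)}.
  apply: (@choice _ _ P) => n; rewrite /P /leb.
  set S := (X in ereal_inf X); move infS : (ereal_inf S) => iS.
  case: iS infS => [r Sr|Soo|Soo].
  - have en1 : (0 < e / (2 ^ n.+1)%:R)%R by rewrite divr_gt0.
    have /(lb_ereal_inf_adherent en1) : ereal_inf S \is a fin_num by rewrite Sr.
    move=> [x [a [l [l0 [Ac ->]]]] xS].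
    by exists (a, l); split => //; split => //; rewrite -Sr; exact/ltW.
  - by have := Aoo n; rewrite /leb -/S Soo.
  - have : 0 <= ereal_inf S by rewrite -[ereal_inf S]/(leb (A n)) leb_ge0.
    by rewrite Soo.
have /card_esym/ppcard_eqP[f] := card_nat2.
pose a i := (G (f i).1).1 (f i).2.
pose l i := (G (f i).1).2 (f i).2.
pose F (p : nat * nat) := (((G p.1).2 p.2) ^+ d)%:E.
have F0 p : 0 <= F p by rewrite lee_fin exprn_ge0// ltW//; case: (PG p.1).
apply: (@le_trans _ _ (\esum_(i in setT) F i)).
  apply: ereal_inf_lbound; exists a, l; split.
    by move=> i; rewrite /l; case: (PG (f i).1).
  split.
    move=> t [i _ Ait]; have [_ [/(_ t Ait) [j _ Hj] _]] := PG i.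
    exists (f^-1%FUN (i, j)) => //.
    rewrite /a /l /= invK ?inE //.
  rewrite -(esum_pred_image F _ xpredT) ?[fun=> _]set_true//.
    congr esum; apply/seteqP; split => // x _; exists (f^-1%FUN x) => //; by rewrite invK ?inE.
rewrite (_ : esum _ _ = \sum_(i <oo) \sum_(j <oo ) F (i, j)); last first.
  pose J : nat -> set (nat * nat) := fun i => [set (i, j) | j in setT].
  rewrite (_ : setT = \bigcup_k J k); last first.
    by rewrite predeqE => -[a0 b]; split => // _; exists a0 => //; exists b.
  rewrite esum_bigcupT /=; last 2 first.
    - apply/trivIsetP => i j _ _ ij.
      rewrite predeqE => -[n m] /=; split => //= -[] [_] _ [<-{n} _].
      by move=> [m' _] [] /esym/eqP; rewrite (negbTE ij).
    - by [].
  rewrite -(image_id [set: nat]) -fun_true esum_pred_image//; last first.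
    by move=> n _; exact: esum_ge0.
  apply: eq_eseriesr => /= j _.
  rewrite -(esum_pred_image F (pair j) predT)//=; last first.
    by move=> ? ? _ _; exact: (@can_inj _ _ _ snd).
  by congr esum; rewrite predeqE => -[a0 b]; split; move=> [i _ <-]; exists i.
apply: lee_nneseries => [n _ _|n _].
  by apply: nneseries_ge0 => k _.
by have [_ [_ ]] := PG n.
Qed.

End leb_props.
Section leb_props2.
Context {R : realType} {d : nat}.
Local Notation T := (Rd R d).
Local Open Scope ereal_scope.

Lemma leb_null_union (A N : set T) : leb N = 0 -> leb (A `|` N) <= leb A.
Proof.
move=> N0.
pose B n := if n is 0%N then A else N.
apply: (@le_trans _ _ (leb (\bigcup_n B n))).
  apply: le_leb => x [Ax|Nx]; first by exists 0%N.
  by exists 1%N.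
apply: (le_trans (leb_sigma_sub B)).
rewrite (nneseries_split 0 1); last by move=> k _; apply: leb_ge0.
rewrite add0n big_nat1 /= eseries0 ?adde0// => k k1 _.
by case: k k1 => // k _ /=.
Qed.

Lemma leb_affine (A B : set T) (b : 'rV[R]_d) (t : R) : (0 < t)%R ->
  (forall x : T, A x -> B ((b + t *: (x : 'rV[R]_d))%R : T)) ->
  (t ^+ d)%:E * leb A <= leb B.
Proof.
move=> t0 AB.
apply: le_ereal_inf_tmp => _ [a [l [l0 [Bc ->]]]].
have td0 : (0 < t ^+ d)%R by rewrite exprn_gt0.
have -> : \sum_(0 <= k <oo) ((l k) ^+ d)%:E =
    (t ^+ d)%:E * \sum_(0 <= k <oo) (((l k / t) ^+ d)%:E).
  rewrite -nneseriesZl; last by move=> k _; rewrite lee_fin exprn_ge0// divr_ge0// ltW.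
  apply: eq_eseriesr => k _; rewrite -EFinM; congr EFin.
  by rewrite -exprMn mulrCA mulfV ?mulr1// gt_eqF.
apply: lee_wpmul2l; first by rewrite lee_fin ltW.
apply: ereal_inf_lbound.
exists (fun k => t^-1 *: (a k - b))%R, (fun k => l k / t)%R; split.
  by move=> k; rewrite divr_gt0.
split => //.
move=> x Ax; have [k _ Hk] := Bc _ (AB x Ax).
exists k => // i; have /andP[H1 H2] := Hk i.
rewrite !mxE in H1 H2 *.
apply/andP; split.
  rewrite -[x ord0 i](mulKf (lt0r_neq0 t0)) ler_wpM2l ?invr_ge0 ?(ltW t0) //; lra.
rewrite (mulrC (l k)) -mulrDr -[x ord0 i](mulKf (lt0r_neq0 t0)) ler_wpM2l ?invr_ge0 ?(ltW t0) //; lra.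
Qed.

End leb_props2.
Section meas.
Context {R : realType} {d : nat}.
Local Notation T := (Rd R d).

Lemma closed_cube (a : 'rV[R]_d) (l : R) : closed (cube a l : set 'rV[R]_d).
Proof.
have -> : (cube a l : set 'rV[R]_d) = \bigcap_(i in setT)
   ((fun x : 'rV[R]_d => x ord0 i) @^-1` [set r | a ord0 i <= r] `&`
    (fun x : 'rV[R]_d => x ord0 i) @^-1` [set r | r <= a ord0 i + l]).
  apply/seteqP; split => [x Hx i _|x Hx i]; first by have /andP[] := Hx i.
  by have [] := Hx i I => /= -> ->.
apply: closed_bigI => i _; apply: closedI.
  by apply: (proj1 (continuous_closedP _)); [exact: coord_continuous|exact: closed_ge].
by apply: (proj1 (continuous_closedP _)); [exact: coord_continuous|exact: closed_le].
Qed.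

Lemma measurable_cube (a : 'rV[R]_d) (l : R) : measurable (cube a l : set T).
Proof.
rewrite -[cube a l]setCK; apply: measurableC; apply: sub_sigma_algebra.
by rewrite /= -closedC setCK; exact: closed_cube.
Qed.

End meas.
Section integ.
Context {R : realType} {d : nat}.
Local Notation T := (Rd R d).
Local Open Scope ereal_scope.
Import HBNNSimple.

Lemma sint0 (z0 : leb (set0 : set T) = 0) (h : T -> R) :
  (forall x, h x = 0%R) -> sintegral leb h = 0.
Proof.
move=> h0; rewrite /sintegral fsbig1// => r _.
have [->|r0] := eqVneq r 0%R; first by rewrite mul0e.
rewrite (_ : h @^-1` [set r] = set0) ?z0 ?mule0//.
by apply/seteqP; split => x //=; rewrite h0 => /esym/eqP; rewrite (negbTE r0).
Qed.

Lemma int_abs_ge (z0 : leb (set0 : set T) = 0) (D : set T) (f : T -> R)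
    (h : {nnsfun T >-> R}) :
  (forall x, D x -> (h x <= `|f x|)%R) -> (forall x, ~ D x -> h x = 0%R) ->
  sintegral leb h <= int_abs D f.
Proof.
move=> hD hND; rewrite /int_abs /integral /=.
set P := ereal_sup _; set Q := ereal_sup _.
have Q0 : Q <= 0.
  apply: ub_ereal_sup => _ [k /= Hk <-]; rewrite le_eqVlt; apply/orP; left; apply/eqP.
  apply: sint0 => // x; apply/eqP; rewrite eq_le fun_ge0 andbT.
  suff : ((k x)%:E <= 0) by rewrite lee_fin.
  apply: (le_trans (Hk x)); rewrite funenegE /patch; case: ifPn => _.
    by rewrite ge_max lexx andbT -EFinN lee_fin oppr_le0 normr_ge0.
  by rewrite oppe0 maxxx.
have hP : sintegral leb h <= P.
  apply: ereal_sup_ubound; exists h => // x.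
  rewrite funeposE /patch; case: ifPn => [/set_mem Dx|/negP NDx].
    by rewrite le_max lee_fin hD.
  by rewrite hND ?maxxx// => /mem_set.
apply: (le_trans hP); rewrite -[leLHS]adde0; apply: leeD => //; by rewrite leeNr oppe0.
Qed.

End integ.
Section sint.
Context {R : realType} {d : nat}.
Local Notation T := (Rd R d).
Local Open Scope ereal_scope.
Import HBNNSimple.

Lemma sint_lb (z0 : leb (set0 : set T) = 0) (h : {nnsfun T >-> R}) (m : nat)
    (v : nat -> R) (S : nat -> set T) :
  set_inj `I_m v -> (forall n, 0 <= v n)%R ->
  (forall n, (n < m)%N -> forall x, S n x -> h x = v n) ->
  \sum_(n < m) (v n)%:E * leb (S n) <= sintegral leb h.
Proof.
move=> vinj v0 hS.
set V := v @` `I_m.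
have finV : finite_set V by apply: finite_image; exact: finite_II.
have finRV : finite_set (range h `|` V) by rewrite finite_setU; split => //; exact: fimfunP.
rewrite /sintegral -(fsbig_widen (range h `|` V) setT) //; last first.
  move=> r [_ /not_orP[Nr _]] /=.
  rewrite (_ : h @^-1` [set r] = set0) ?z0 ?mule0//.
  by apply/seteqP; split => x //= hx; apply: Nr; exists x.
apply: (@le_trans _ _ (\sum_(r \in V) r%:E * leb (h @^-1` [set r]))); last first.
  apply: lee_fsum_nneg_subset => //.
    by move=> r; rewrite !inE => Vr; right.
  move=> r; rewrite !inE => /andP[_]; rewrite inE => -[[x _ <-]|[n _ <-]].
    by apply: mule_ge0; [rewrite lee_fin fun_ge0|exact: leb_ge0].
  by apply: mule_ge0; [rewrite lee_fin v0|exact: leb_ge0].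
rewrite fsbig_image // -fsbig_ord.
apply: lee_sum => n _; have nm := ltn_ord n; apply: lee_wpmul2l; first by rewrite lee_fin v0.
by apply: le_leb => x Sx /=; rewrite (hS n nm x Sx).
Qed.

Lemma mk_sfun (m : nat) (v : nat -> R) (S : nat -> set T)
   (mS : forall n, measurable (S n)) (v0 : forall n, (0 <= v n)%R) :
  exists h : {nnsfun T >-> R}, forall x, h x = (\sum_(n < m) v n * \1_(S n) x)%R.
Proof.
exists (sum_nnsfun (fun n => scale_nnsfun (indic_nnsfun R (mS n)) (v0 n)) m) => x.
rewrite sum_nnsfunE; apply: eq_bigr => n _ /=.
by rewrite measurable_realfun.mindicE.
Qed.

End sint.
Section piece.
Context {R : realType} {d : nat}.
Local Notation T := (Rd R d).
Import archimedean.

Definition Epiece (g : T -> R) (k : nat) : set T :=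
  cube (const_mx (- k.+1%:R)) (2 * k.+1%:R) `&` [set x | (k.+1%:R)^-1 <= `|g x|].

Lemma ex_k (x : 'rV[R]_d) (y : R) : y != 0 -> exists k : nat,
  (forall i, - k.+1%:R <= x ord0 i <= - k.+1%:R + 2 * k.+1%:R) /\
  (k.+1%:R)^-1 <= `|y|.
Proof.
move=> y0.
set s := \sum_i `|x ord0 i| + `|y|^-1.
have s0 : 0 <= s by rewrite addr_ge0 ?invr_ge0// sumr_ge0.
exists (Num.trunc s); have := truncnS_gt s; set K := (Num.trunc s).+1%:R => sK.
have K0 : 0 < K by rewrite ltr0Sn.
split.
  move=> i; have : `|x ord0 i| <= \sum_i `|x ord0 i|.
    by rewrite (bigD1 i)//= lerDl sumr_ge0.
  have : `|y|^-1 >= 0 by rewrite invr_ge0.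
  rewrite -/s; move: sK; rewrite /s => sK y1 xi.
  have := ler_norml (x ord0 i) K; rewrite (_ : `|x ord0 i| <= K = true); last first.
    by apply/idP; apply: ltW; lra.
  move=> /esym /andP[H1 H2]; apply/andP; split; lra.
have ny0 : 0 < `|y| by rewrite normr_gt0.
rewrite -(invrK `|y|) lef_pV2 ?posrE ?invr_gt0//.
apply: ltW; apply: le_lt_trans sK; rewrite /s lerDr sumr_ge0//.
Qed.

Lemma measurable_Epiece (g : T -> R) k : measurable_fun setT g ->
  measurable (Epiece g k).
Proof.
move=> mg; apply: measurableI; first exact: measurable_cube.
have mng : measurable_fun setT (fun x => `|g x|) :=
  measurableT_comp (@measurable_realfun.normr_measurable R setT) mg.
have := mng measurableT `[(k.+1%:R)^-1, +oo[%classic (measurable_itv _).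
rewrite setTI; congr measurable; apply/seteqP; split => x /=; by rewrite in_itv /= andbT.
Qed.

Lemma pos_piece (g : T -> R) : measurable_fun setT g -> ~ ae_zero g ->
  exists k : nat, (0 < leb (Epiece g k))%E.
Proof.
move=> mg gnz; apply: contrapT => Hn; apply: gnz.
have E0 k : leb (Epiece g k) = 0%E.
  apply/eqP; rewrite eq_le leb_ge0 andbT leNgt; apply/negP => H; apply: Hn; by exists k.
exists (\bigcup_k Epiece g k); split.
  by apply: bigcupT_measurable => k; exact: measurable_Epiece.
split.
  apply/eqP; rewrite eq_le leb_ge0 andbT.
  apply: (le_trans (leb_sigma_sub _)); rewrite eseries0 // => k _ _; exact: E0.
move=> x /= gx; have /eqP gx0 := gx.
have [k [Hk1 Hk2]] := ex_k (x : 'rV[R]_d) gx0.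
exists k => //; split => // i; rewrite mxE; exact: Hk1.
Qed.

End piece.
Section geo.
Context {R : realType} {d : nat}.
Local Notation T := (Rd R d).
Variables (a0 : 'rV[R]_d) (l0 : R) (i0 : 'I_d).
Hypothesis l00 : 0 < l0.

Definition tt (n : nat) : R := 2 ^+ n.
Definition bpos (n : nat) : 'rV[R]_d :=
  a0 + \row_j (if j == i0 then 3 * (tt n * l0) else 0).
Definition Qc (n : nat) : set T := cube (bpos n) (tt n * l0).
Definition Lside (n : nat) : R := 4 * (tt n * l0).

Lemma tt_ge1 n : 1 <= tt n.
Proof. by rewrite /tt exprn_ege1// ler1n. Qed.

Lemma tt_gt0 n : 0 < tt n.
Proof. by apply: lt_le_trans (tt_ge1 n). Qed.

Lemma tt_lt n m : (n < m)%N -> 2 * tt n <= tt m.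
Proof.
move=> nm; have h2 : (1 : R) < 2 by lra.
by rewrite /tt -exprS (ler_eXn2l h2).
Qed.

Lemma Lside_gt0 n : 0 < Lside n.
Proof. by rewrite /Lside !mulr_gt0// tt_gt0. Qed.

Lemma Q0_sub n : cube a0 l0 `<=` cube a0 (Lside n).
Proof.
move=> x Hx i; have /andP[H1 H2] := Hx i; apply/andP; split => //.
have := tt_ge1 n; rewrite /Lside => t1.
have : l0 <= tt n * l0 by rewrite ler_peMl// ltW.
lra.
Qed.

Lemma Qc_sub n : Qc n `<=` cube a0 (Lside n).
Proof.
move=> x Hx i; have /andP[] := Hx i; rewrite /bpos !mxE /Lside.
have : 0 < tt n * l0 by rewrite mulr_gt0// tt_gt0.
set p := tt n * l0; case: ifPn => _ p0 H1 H2; apply/andP; split; lra.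
Qed.

Lemma Qc_disj n m x : (n < m)%N -> Qc n x -> Qc m x -> False.
Proof.
move=> nm Hn Hm; have /andP[_] := Hn i0; have /andP[] := Hm i0.
rewrite /bpos !mxE eqxx => H1 H2 H3.
have H4 : tt n * l0 <= tt m * l0 / 2.
  by rewrite ler_pdivlMr // mulrAC ler_pM2r // mulrC; exact: tt_lt nm.
have H5 : 0 < tt n * l0 by rewrite mulr_gt0// tt_gt0.
move: H1 H2 H3 H4 H5; set p := tt n * l0; set q := tt m * l0 => H1 H2 H3 H4 H5; lra.
Qed.

Lemma Qc_from0 n : ((tt n ^+ d)%:E * leb (cube a0 l0 : set T) <= leb (Qc n))%E.
Proof.
apply: (leb_affine (b := bpos n - tt n *: a0) (tt_gt0 n)) => x Hx i.
have /andP[H1 H2] := Hx i.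
rewrite /bpos !mxE.
have t0 := tt_gt0 n.
have : tt n * a0 ord0 i <= tt n * x ord0 i by rewrite ler_pM2l.
have : tt n * x ord0 i <= tt n * (a0 ord0 i + l0) by rewrite ler_pM2l.
rewrite mulrDr; set p := tt n * l0; set u := tt n * a0 ord0 i; set w := tt n * x ord0 i.
case: ifPn => _ ? ?; apply/andP; split; lra.
Qed.

End geo.
Section mainsec.
Import HBNNSimple.
Import archimedean.

Lemma pos_real (R : realType) (x : \bar R) : (0 < x)%E -> exists2 r : R, 0 < r & (r%:E <= x)%E.
Proof.
case: x => [r||] //=.
  by move=> r0; exists r; rewrite -?lte_fin.
by move=> _; exists 1 => //; exact: leey.
Qed.

Theorem proposition4p6 (R : realType) (d : nat)
    (X : set (Rd R d -> R)) (nX : (Rd R d -> R) -> R) :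
  (0 < d)%N ->
  is_QBFS X nX ->
  (exists g, kothe X g /\ ~ ae_zero g) ->
  X (fun _ => 1) ->
  ~ HLmax_bounded (kothe X) (kothe_norm X nX).
Proof.
move=> d0 QB [g [[mg gint] gnz]] X1 [C [C0 HC]].
have [h [[mh hint] [N [mN [N0 HN]]] _]] := HC g (conj mg gint).
have z0 : leb (set0 : set (Rd R d)) = 0%E.
  by apply/eqP; rewrite eq_le leb_ge0 andbT -N0; apply: le_leb.
have hfin := hint _ X1.
have [k Ek] := pos_piece mg gnz.
set E := Epiece g k.
have mE : measurable E by exact: measurable_Epiece.
set l0 : R := 2 * k.+1%:R.
set a0 : 'rV[R]_d := const_mx (- k.+1%:R).
have l00 : 0 < l0 by rewrite /l0 mulr_gt0// ltr0Sn.
set eps : R := (k.+1%:R)^-1.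
have eps0 : 0 < eps by rewrite invr_gt0 ltr0Sn.
have EQ0 : E `<=` cube a0 l0 by move=> x [].
have [s1 Hs1] := mk_sfun 1 (fun _ => mE) (fun _ => ltW eps0).
have s1lb : (eps%:E * leb E <= sintegral leb s1)%E.
  have := @sint_lb R d z0 s1 1 (fun _ => eps) (fun _ => E).
  rewrite big_ord1; apply => //.
    move=> x y; rewrite !inE /= !ltnS !leqn0 => /eqP -> /eqP -> _ //.
    by move=> _; exact: ltW.
  by move=> n _ x Ex; rewrite Hs1 big_ord1 indicE mem_set// mulr1.
have sp : (0 < sintegral leb s1)%E.
  by apply: lt_le_trans s1lb; rewrite mule_gt0// lte_fin.
have [c c0 cle] : exists2 c : R, 0 < c & (c%:E <= sintegral leb s1)%E.
  move: sp; case: (sintegral leb s1) => [r||] //=.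
    by move=> r0; exists r; rewrite -?lte_fin.
  by move=> _; exists 1 => //; exact: leey.
have cD D : cube a0 l0 `<=` D -> (c%:E <= int_abs D g)%E.
  move=> QD; apply: (le_trans cle); apply: int_abs_ge => // x.
    move=> Dx; rewrite Hs1 big_ord1 indicE.
    case: (boolP (x \in E)) => [/set_mem [_ /= Hx]|_]; first by rewrite mulr1.
    by rewrite mulr0.
  move=> NDx; rewrite Hs1 big_ord1 indicE memNset ?mulr0//.
  by move=> /EQ0 /QD.
have i0 : 'I_d := Ordinal d0.
pose Ln n := Lside l0 n.
pose v n : R := (Ln n ^+ d)^-1 * c.
have Ln0 n : 0 < Ln n by exact: Lside_gt0.
have v0 n : 0 < v n by rewrite /v mulr_gt0// invr_gt0 exprn_gt0.
have Hlb n x : Qc a0 l0 i0 n x -> ((v n)%:E <= HLmax g x)%E.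
  move=> Qx; apply: le_ereal_sup_tmp.
  exists (((Ln n ^+ d)^-1)%:E * int_abs (cube a0 (Ln n)) g)%E.
    exists a0, (Ln n); split => //; exact: (Qc_sub l00).
  rewrite /v EFinM; apply: lee_wpmul2l.
    by rewrite lee_fin invr_ge0 exprn_ge0// ltW.
  exact/cD/(Q0_sub l00).
have Hh n x : Qc a0 l0 i0 n x -> ~ N x -> v n <= `|h x|.
  move=> Qx Nx; have HE : HLmax g x = (h x)%:E.
    by apply: contrapT => /HN.
  have := Hlb n x Qx; rewrite HE lee_fin => /le_trans; apply; exact: ler_norm.
pose delta := ((((4 * l0) ^+ d)^-1 * c)%:E * leb E)%E.
have Hleb n : (delta <= (v n)%:E * leb (Qc a0 l0 i0 n `\` N))%E.
  have e1 : v n * tt n ^+ d = ((4 * l0) ^+ d)^-1 * c.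
    rewrite /v /Ln /Lside mulrCA exprMn invfM [LHS]mulrC !mulrA mulfV ?mul1r //.
    by rewrite expf_neq0 // gt_eqF // tt_gt0.
  have L1 : (leb (Qc a0 l0 i0 n) <= leb (Qc a0 l0 i0 n `\` N))%E.
    apply: (le_trans _ (leb_null_union _ N0)); apply: le_leb => x Qx.
    by case: (pselect (N x)) => Nx; [right|left].
  rewrite /delta -e1 EFinM -muleA; apply: lee_wpmul2l; first by rewrite lee_fin ltW.
  apply: (le_trans _ L1); apply: (le_trans _ (Qc_from0 a0 l0 i0 n)).
  by apply: lee_wpmul2l; [rewrite lee_fin exprn_ge0 // ltW // tt_gt0|exact: le_leb].
have delta0 : (0 < delta)%E.
  by rewrite /delta mule_gt0 // lte_fin mulr_gt0 // invr_gt0 exprn_gt0 // mulr_gt0.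
have [dr dr0 drle] : exists2 dr : R, 0 < dr & (dr%:E <= delta)%E.
  exact: pos_real.
have vdec n m : (n < m)%N -> v m < v n.
  move=> nm; rewrite /v ltr_pM2r // ltf_pV2 ?posrE ?exprn_gt0 //.
  rewrite ltrXn2r ?gtn_eqF // ?ltW //.
  rewrite /Ln /Lside ltr_pM2l // ltr_pM2r //.
  have := tt_lt (R:=R) nm; have := tt_gt0 (R:=R) n; lra.
have vinj m : set_inj `I_m v.
  move=> x y _ _ vxy; case: (ltngtP x y) => // H.
    by have := vdec _ _ H; rewrite vxy ltxx.
  by have := vdec _ _ H; rewrite vxy ltxx.
have low m : ((dr *+ m)%:E <= int_abs setT (fun x => (1 * h x)%R))%E.
  pose S n := Qc a0 l0 i0 n `\` N.
  have mS n : measurable (S n) by apply: measurableD => //; exact: measurable_cube.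
  have [s Hs] := mk_sfun m mS (fun n => ltW (v0 n)).
  have hS n : (n < m)%N -> forall x, S n x -> s x = v n.
    move=> nm x Sx; rewrite Hs (bigD1 (Ordinal nm)) //= indicE mem_set // mulr1.
    rewrite big1 ?addr0 // => j jn; rewrite indicE memNset ?mulr0 // => -[Qj _].
    have jn' : nat_of_ord j != n by apply: contraNneq jn => H; apply/eqP/val_inj.
    case: (ltngtP j n) jn' => // H _.
      exact: (Qc_disj l00 H Qj Sx.1).
    exact: (Qc_disj l00 H Sx.1 Qj).
  apply: (le_trans _ (int_abs_ge z0 (D := setT) (f := fun x => 1 * h x) (h := s) _ _)); last 2 first.
  - move=> x _; case: (pselect (exists n : 'I_m, S n x)) => [[n Sn]|none].
      rewrite (hS n (ltn_ord n) x Sn) mul1r; exact: Hh Sn.1 Sn.2.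
    rewrite Hs big1 ?normr_ge0 // => j _; rewrite indicE memNset ?mulr0 // => Sj.
    by apply: none; exists j.
  - by move=> x [].
  apply: (le_trans _ (sint_lb z0 (vinj m) (fun n => ltW (v0 n)) hS)).
  rewrite [X in (X <= _)%E](_ : _ = \sum_(n < m) dr%:E)%E; last first.
    by rewrite sumEFin sumr_const card_ord.
  apply: lee_sum => n _; apply: (le_trans drle); exact: Hleb.
move: hfin (low 0%N) (low (Num.trunc ((fine (int_abs setT (fun x => 1 * h x))) / dr)).+1).
case: (int_abs setT (fun x => 1 * h x)) => [r||] //= _ _.
rewrite lee_fin => H.
have := truncnS_gt (r / dr); rewrite ltr_pdivrMr // => H2.
have : r < dr *+ (Num.trunc (r / dr)).+1 by rewrite -mulr_natr mulrC.
lra.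
Qed.
End mainsec.
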